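(* Let $\mathcal H$ be a real Hilbert space of finite dimension $d$ with orthonormal basis $(e_\ell)_{0\leq\ell\leq d-1}$, let $G\in\mathcal L(\mathcal S(\mathcal H),\mathcal A(\mathcal H))$ be diagonalizable in this basis with matrix-eigenvalue $(g_{i,j})$, let $H_0\in\mathcal S(\mathcal H)$ and let $H$ be the solution of $H'=[H,G(H)]$, $H(0)=H_0$. Assume that $H(t)$ converges as $t\to+\infty$ to a diagonal operator $H_\infty=\mathrm{diag}(\alpha_\ell)_{0\leq\ell\leq d-1}$ (as is the case under the assumptions of Corollary 1.4 above), and that $$-\gamma:=\max_{0\leq i<j\leq d-1}g_{i,j}(\alpha_i-\alpha_j)<0.$$ Then there exist $T,C>0$ such that for all $t\geq T$, $$\|H(t)-\mathrm{diag}(H(t))\|_{\mathsf{HS}}\leq Ce^{-\gamma t},$$ where $\mathrm{diag}(H)$ denotes the diagonal part of $H$ in the basis $(e_\ell)$.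
   Context: $\mathcal S(\mathcal H)$, $\mathcal A(\mathcal H)$ are the symmetric and skew-symmetric operators; $\|\cdot\|_{\mathsf{HS}}$ is the Hilbert-Schmidt (Frobenius) norm; $[A,B]=AB-BA$. With $e_j^*(x)=\langle x,e_j\rangle$, define $E_{i,j}=\frac1{\sqrt2}(e_j^*(\cdot)e_i+e_i^*(\cdot)e_j)$ for $i\neq j$, $E_{i,i}=e_i^*(\cdot)e_i$, $E^\pm_{i,j}=\frac1{\sqrt2}(e_j^*(\cdot)e_i-e_i^*(\cdot)e_j)$. $G$ is diagonalizable with matrix-eigenvalue $(g_{i,j})$ (a skew-symmetric real family) if $G(E_{i,j})=g_{i,j}E^\pm_{i,j}$ for all $i,j$. *)

(* Defs.v *)
From Stdlib Require Import Reals Lra List.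
Open Scope R_scope.

(* Operators on H (dim d, orthonormal basis e_0..e_{d-1}) are represented by
   their matrices in that basis: A i j = <A e_j, e_i>. Only indices < d matter. *)
Definition Mat := nat -> nat -> R.

Definition fsum (d : nat) (f : nat -> R) : R :=
  fold_right Rplus 0 (map f (seq 0 d)).

Definition meq (d : nat) (A B : Mat) : Prop :=
  forall i j, (i < d)%nat -> (j < d)%nat -> A i j = B i j.

Definition madd (A B : Mat) : Mat := fun i j => A i j + B i j.
Definition mscale (c : R) (A : Mat) : Mat := fun i j => c * A i j.
Definition mmul (d : nat) (A B : Mat) : Mat :=
  fun i j => fsum d (fun k => A i k * B k j).
Definition comm (d : nat) (A B : Mat) : Mat :=
  fun i j => mmul d A B i j - mmul d B A i j.

Definition symmetric (d : nat) (A : Mat) : Prop :=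
  forall i j, (i < d)%nat -> (j < d)%nat -> A i j = A j i.

Definition ind (a b : nat) : R := if Nat.eqb a b then 1 else 0.

Definition Esym (i j : nat) : Mat := fun k l =>
  if Nat.eqb i j then ind k i * ind l i
  else / sqrt 2 * (ind k i * ind l j + ind k j * ind l i).
Definition Eskew (i j : nat) : Mat := fun k l =>
  / sqrt 2 * (ind k i * ind l j - ind k j * ind l i).

Definition diagonalizable (d : nat) (G : Mat -> Mat) (g : nat -> nat -> R) : Prop :=
  (forall A B, meq d A B -> meq d (G A) (G B)) /\
  (forall A B, symmetric d A -> symmetric d B -> meq d (G (madd A B)) (madd (G A) (G B))) /\
  (forall c A, symmetric d A -> meq d (G (mscale c A)) (mscale c (G A))) /\
  (forall i j, (i < d)%nat -> (j < d)%nat -> g i j = - g j i) /\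
  (forall i j, (i < d)%nat -> (j < d)%nat -> meq d (G (Esym i j)) (mscale (g i j) (Eskew i j))).

Definition HSnorm (d : nat) (A : Mat) : R :=
  sqrt (fsum d (fun i => fsum d (fun j => (A i j) ^ 2))).

Definition offdiag (A : Mat) : Mat := fun i j => if Nat.eqb i j then 0 else A i j.

(* Main.v *)
Require Import Defs.
From Stdlib Require Import Reals.
Open Scope R_scope.
From Stdlib Require Import Lra Lia List.
From Coquelicot Require Coquelicot.
Import Defs.


Lemma fold_Rplus_acc (l : list R) (a : R) :
  fold_right Rplus a l = fold_right Rplus 0 l + a.
Proof. induction l; simpl; [lra| rewrite IHl; lra]. Qed.

Lemma fsum_0 f : fsum 0 f = 0.
Proof. reflexivity. Qed.

Lemma fsum_S d f : fsum (S d) f = fsum d f + f d.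
Proof.
  unfold fsum. rewrite seq_S, map_app, fold_right_app. simpl.
  rewrite fold_Rplus_acc. lra.
Qed.

Lemma fsum_ext d f g : (forall i, (i < d)%nat -> f i = g i) -> fsum d f = fsum d g.
Proof.
  induction d; intros H; [reflexivity|].
  rewrite !fsum_S. rewrite IHd. { rewrite H by lia. reflexivity. }
  intros; apply H; lia.
Qed.

Lemma fsum_plus d f g : fsum d (fun i => f i + g i) = fsum d f + fsum d g.
Proof. induction d; [unfold fsum; simpl; lra|]. rewrite !fsum_S, IHd. lra. Qed.

Lemma fsum_minus d f g : fsum d (fun i => f i - g i) = fsum d f - fsum d g.
Proof. induction d; [unfold fsum; simpl; lra|]. rewrite !fsum_S, IHd. lra. Qed.

Lemma fsum_scale d c f : fsum d (fun i => c * f i) = c * fsum d f.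
Proof. induction d; [unfold fsum; simpl; lra|]. rewrite !fsum_S, IHd. lra. Qed.

Lemma fsum_const d c : fsum d (fun _ => c) = INR d * c.
Proof. induction d; [unfold fsum; simpl; lra|]. rewrite fsum_S, IHd, S_INR. lra. Qed.

Lemma fsum_le d f g : (forall i, (i < d)%nat -> f i <= g i) -> fsum d f <= fsum d g.
Proof.
  induction d; intros H; [unfold fsum; simpl; lra|].
  rewrite !fsum_S. assert (f d <= g d) by (apply H; lia).
  assert (fsum d f <= fsum d g) by (apply IHd; intros; apply H; lia). lra.
Qed.

Lemma fsum_nonneg d f : (forall i, (i < d)%nat -> 0 <= f i) -> 0 <= fsum d f.
Proof.
  intros H. replace 0 with (fsum d (fun _ => 0)).
  - apply fsum_le; auto.
  - rewrite fsum_const; lra.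
Qed.

Lemma fsum_single d f k : (k < d)%nat -> (forall i, (i < d)%nat -> i <> k -> f i = 0) ->
  fsum d f = f k.
Proof.
  induction d; intros Hk H; [lia|].
  rewrite fsum_S. destruct (Nat.eq_dec k d) as [->|Hne].
  - replace (fsum d f) with (fsum d (fun _ => 0)).
    + rewrite fsum_const; lra.
    + apply fsum_ext; intros; symmetry; apply H; lia.
  - rewrite IHd by (try lia; intros; apply H; lia). rewrite (H d) by lia. lra.
Qed.

Lemma fsum_elem_le d f k : (forall i, (i < d)%nat -> 0 <= f i) -> (k < d)%nat -> f k <= fsum d f.
Proof.
  induction d; intros H Hk; [lia|]. rewrite fsum_S.
  destruct (Nat.eq_dec k d) as [->|Hne].
  - assert (0 <= fsum d f) by (apply fsum_nonneg; intros; apply H; lia). lra.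
  - assert (f k <= fsum d f) by (apply IHd; [intros; apply H; lia| lia]).
    assert (0 <= f d) by (apply H; lia). lra.
Qed.

Lemma fsum_swap d e f : fsum d (fun i => fsum e (fun j => f i j)) = fsum e (fun j => fsum d (fun i => f i j)).
Proof.
  induction d.
  - rewrite fsum_0. rewrite (fsum_ext e _ (fun _ => 0)) by (intros; reflexivity).
    rewrite fsum_const; lra.
  - rewrite fsum_S, IHd, <- fsum_plus. apply fsum_ext; intros. rewrite fsum_S. reflexivity.
Qed.

Lemma fsum_abs d f : Rabs (fsum d f) <= fsum d (fun i => Rabs (f i)).
Proof.
  induction d.
  - unfold fsum; simpl; rewrite Rabs_R0; lra.
  - rewrite !fsum_S. eapply Rle_trans; [apply Rabs_triang|]. lra.
Qed.

Lemma ind_eq k : ind k k = 1.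
Proof. unfold ind; rewrite Nat.eqb_refl; reflexivity. Qed.
Lemma ind_neq k i : k <> i -> ind k i = 0.
Proof. intros H; unfold ind; apply Nat.eqb_neq in H; rewrite H; reflexivity. Qed.
Lemma ind_sym k i : ind k i = ind i k.
Proof. unfold ind; rewrite Nat.eqb_sym; reflexivity. Qed.

Lemma fsum_ind_l d k f : (k < d)%nat -> fsum d (fun i => ind k i * f i) = f k.
Proof.
  intros Hk. rewrite (fsum_single d _ k Hk).
  - rewrite ind_eq; lra.
  - intros i _ Hi. rewrite ind_neq by auto. lra.
Qed.

Lemma fsum_ind_r d k f : (k < d)%nat -> fsum d (fun i => f i * ind k i) = f k.
Proof.
  intros Hk. rewrite <- (fsum_ind_l d k f Hk). apply fsum_ext; intros; lra.
Qed.

Lemma derivable_fsum d (f : nat -> R -> R) (f' : nat -> R) t :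
  (forall i, (i < d)%nat -> derivable_pt_lim (f i) t (f' i)) ->
  derivable_pt_lim (fun s => fsum d (fun i => f i s)) t (fsum d f').
Proof.
  induction d; intros H.
  - unfold fsum; simpl. apply derivable_pt_lim_const.
  - rewrite fsum_S.
    apply (derivable_pt_lim_ext (fun s => fsum d (fun i => f i s) + f d s)).
    { intros; rewrite fsum_S; reflexivity. }
    apply (derivable_pt_lim_plus (fun s => fsum d (fun i => f i s)) (f d)).
    + apply IHd; intros; apply H; lia.
    + apply H; lia.
Qed.

Definition mzero : Mat := fun _ _ => 0.
Definition msum (l : list nat) (F : nat -> Mat) : Mat :=
  fold_right (fun i acc => madd (F i) acc) mzero l.

Lemma msum_entry l F k m : msum l F k m = fold_right Rplus 0 (map (fun i => F i k m) l).
Proof. induction l; simpl; [reflexivity|]. unfold madd. rewrite <- IHl. reflexivity. Qed.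

Lemma msum_fsum d F k m : msum (seq 0 d) F k m = fsum d (fun i => F i k m).
Proof. rewrite msum_entry. reflexivity. Qed.

Lemma sym_msum d l F : (forall i, In i l -> symmetric d (F i)) -> symmetric d (msum l F).
Proof.
  induction l; intros H k m Hk Hm; simpl.
  - reflexivity.
  - unfold madd. rewrite (H a (or_introl eq_refl)) by auto.
    rewrite IHl; auto. intros; apply H; right; auto.
Qed.

Lemma meq_refl d A : meq d A A.
Proof. intros i j _ _; reflexivity. Qed.

Section GL.
Variables (d : nat) (G : Mat -> Mat) (g : nat -> nat -> R).
Hypothesis hG : diagonalizable d G g.

Lemma G_zero : meq d (G mzero) mzero.
Proof.
  destruct hG as [h1 [h2 [h3 [h4 h5]]]].
  intros k m Hk Hm.
  assert (E : meq d mzero (mscale 0 mzero)) by (intros i j _ _; unfold mzero, mscale; ring).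
  rewrite (h1 _ _ E k m Hk Hm).
  rewrite (h3 0 mzero) by (auto; intros i j _ _; reflexivity).
  unfold mscale, mzero; ring.
Qed.

Lemma G_msum l F : (forall i, In i l -> symmetric d (F i)) ->
  meq d (G (msum l F)) (msum l (fun i => G (F i))).
Proof.
  destruct hG as [h1 [h2 [h3 [h4 h5]]]].
  induction l; intros H k m Hk Hm.
  - simpl. apply G_zero; auto.
  - simpl. rewrite h2; auto.
    + unfold madd. rewrite IHl; auto. intros; apply H; right; auto.
    + apply H; left; auto.
    + apply sym_msum. intros; apply H; right; auto.
Qed.
End GL.

Lemma dsum_ind d k l F : (k < d)%nat -> (l < d)%nat ->
  fsum d (fun i => fsum d (fun j => F i j * (ind k i * ind l j))) = F k l.
Proof.
  intros Hk Hl.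
  rewrite (fsum_ext d _ (fun i => ind k i * fsum d (fun j => ind l j * F i j))).
  - rewrite fsum_ind_l by auto. apply fsum_ind_l; auto.
  - intros i _. rewrite <- fsum_scale. apply fsum_ext; intros; ring.
Qed.

Lemma dsum_ind2 d k l F : (k < d)%nat -> (l < d)%nat ->
  fsum d (fun i => fsum d (fun j => F i j * (ind k j * ind l i))) = F l k.
Proof.
  intros Hk Hl. rewrite <- (dsum_ind d l k F Hl Hk).
  apply fsum_ext; intros; apply fsum_ext; intros; ring.
Qed.

Lemma sqrt2_inv2 : / sqrt 2 * / sqrt 2 = / 2.
Proof.
  rewrite <- Rinv_mult. rewrite sqrt_sqrt; lra.
Qed.

Definition Q (A : Mat) (i j : nat) : Mat :=
  mscale (if Nat.eqb i j then A i i else A i j / sqrt 2) (Esym i j).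

Lemma Q_entry A i j k l :
  Q A i j k l = A i j / 2 * (ind k i * ind l j) + A i j / 2 * (ind k j * ind l i).
Proof.
  unfold Q, mscale, Esym. destruct (Nat.eqb i j) eqn:E.
  - apply Nat.eqb_eq in E; subst. field.
  - unfold Rdiv. transitivity (A i j * (/ sqrt 2 * / sqrt 2) * (ind k i * ind l j + ind k j * ind l i)).
    + ring.
    + rewrite sqrt2_inv2. ring.
Qed.

Lemma sym_Esym d i j : symmetric d (Esym i j).
Proof.
  intros k l _ _. unfold Esym. destruct (Nat.eqb i j); ring.
Qed.

Lemma sym_mscale d c A : symmetric d A -> symmetric d (mscale c A).
Proof. intros H k l Hk Hl; unfold mscale; rewrite H; auto. Qed.

Lemma decomp d A : symmetric d A ->
  meq d A (msum (seq 0 d) (fun i => msum (seq 0 d) (fun j => Q A i j))).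
Proof.
  intros HA k l Hk Hl. rewrite msum_fsum.
  rewrite (fsum_ext d _ (fun i => fsum d (fun j => A i j / 2 * (ind k i * ind l j)) +
                                   fsum d (fun j => A i j / 2 * (ind k j * ind l i)))).
  - rewrite fsum_plus. rewrite dsum_ind by auto. rewrite dsum_ind2 by auto.
    rewrite (HA l k) by auto. field.
  - intros i _. rewrite msum_fsum, <- fsum_plus. apply fsum_ext; intros; apply Q_entry.
Qed.

Lemma G_entry d G g : diagonalizable d G g -> forall A, symmetric d A ->
  forall k l, (k < d)%nat -> (l < d)%nat -> G A k l = g k l * A k l.
Proof.
  intros hG A HA k l Hk Hl.
  pose proof hG as [h1 [h2 [h3 [h4 h5]]]].
  rewrite (h1 _ _ (decomp d A HA)) by auto.
  assert (Hs : forall i, symmetric d (msum (seq 0 d) (fun j => Q A i j))).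
  { intros i. apply sym_msum. intros; apply sym_mscale, sym_Esym. }
  rewrite (G_msum d G g hG) by first [assumption | intros; apply Hs].
  rewrite msum_fsum.
  rewrite (fsum_ext d _ (fun i => fsum d (fun j => g i j * A i j / 2 * (ind k i * ind l j)) -
                                   fsum d (fun j => g i j * A i j / 2 * (ind k j * ind l i)))).
  - rewrite fsum_minus. rewrite dsum_ind by auto. rewrite dsum_ind2 by auto.
    rewrite (HA l k) by auto. rewrite (h4 l k) by auto. field.
  - intros i Hi. rewrite (G_msum d G g hG) by first [assumption | intros; apply sym_mscale, sym_Esym].
    rewrite msum_fsum, <- fsum_minus. apply fsum_ext; intros j Hj.
    unfold Q. rewrite h3 by (auto; apply sym_Esym). unfold mscale.
    rewrite h5 by auto. unfold mscale, Eskew.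
    destruct (Nat.eqb i j) eqn:E.
    + apply Nat.eqb_eq in E; subst. ring.
    + unfold Rdiv. transitivity (g i j * A i j * (/ sqrt 2 * / sqrt 2) * (ind k i * ind l j - ind k j * ind l i)).
      * ring.
      * rewrite sqrt2_inv2. ring.
Qed.
Module DExp.
Import Coquelicot.Coquelicot.
Lemma dexp_gen a K b t : derivable_pt_lim (fun s => exp (a * s + K * exp (b * s))) t
  (exp (a * t + K * exp (b * t)) * (a + K * b * exp (b * t))).
Proof. apply is_derive_Reals. auto_derive; auto. ring. Qed.
End DExp.
Lemma dexp_gen a K b t : derivable_pt_lim (fun s => exp (a * s + K * exp (b * s))) t
  (exp (a * t + K * exp (b * t)) * (a + K * b * exp (b * t))).
Proof. exact (DExp.dexp_gen a K b t). Qed.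

Lemma dexp_lin a t : derivable_pt_lim (fun s => exp (a * s)) t (a * exp (a * t)).
Proof.
  apply (derivable_pt_lim_ext (fun s => exp (a * s + 0 * exp (0 * s)))).
  { intros; f_equal; ring. }
  replace (a * exp (a * t)) with (exp (a * t + 0 * exp (0 * t)) * (a + 0 * 0 * exp (0 * t))).
  - apply dexp_gen.
  - replace (a * t + 0 * exp (0 * t)) with (a * t) by ring. ring.
Qed.

Lemma nonincr f f' a b : a <= b -> (forall c, a <= c <= b -> derivable_pt_lim f c (f' c)) ->
  (forall c, a <= c <= b -> f' c <= 0) -> f b <= f a.
Proof.
  intros Hab Hd Hn. destruct (Rle_lt_or_eq_dec a b Hab) as [Hlt|<-]; [|lra].
  destruct (MVT_cor2 f f' a b Hlt Hd) as [c [E Hc]].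
  assert (f' c <= 0) by (apply Hn; lra).
  assert (f' c * (b - a) <= 0) by nra.
  lra.
Qed.

Lemma unif1 (Q : nat -> R -> Prop) n :
  (forall j, (j < n)%nat -> exists T, forall t, T <= t -> Q j t) ->
  exists T, forall t, T <= t -> forall j, (j < n)%nat -> Q j t.
Proof.
  induction n; intros H.
  - exists 0; intros; lia.
  - destruct IHn as [T1 H1]. { intros; apply H; lia. }
    destruct (H n) as [T2 H2]; [lia|].
    exists (Rmax T1 T2). intros t Ht j Hj.
    destruct (Nat.eq_dec j n) as [->|Hne].
    + apply H2. pose proof (Rmax_r T1 T2). lra.
    + apply H1; [pose proof (Rmax_l T1 T2); lra | lia].
Qed.

Lemma sqrt_exp y : sqrt (exp y) = exp (y / 2).
Proof.
  replace (exp y) with (exp (y / 2) * exp (y / 2)).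
  - apply sqrt_square. left; apply exp_pos.
  - rewrite <- exp_plus. f_equal; field.
Qed.

Lemma cubic a b c e m G0 : Rabs a <= m -> Rabs e <= 2 * G0 ->
  a * (b * c * e) <= G0 * m * (b ^ 2 + c ^ 2).
Proof.
  intros Ha He.
  assert (HP : 2 * Rabs (b * c) <= b ^ 2 + c ^ 2).
  { rewrite Rabs_mult. destruct (Rle_lt_dec 0 b), (Rle_lt_dec 0 c);
    [rewrite (Rabs_right b), (Rabs_right c) by lra|rewrite (Rabs_right b), (Rabs_left c) by lra
    |rewrite (Rabs_left b), (Rabs_right c) by lra|rewrite (Rabs_left b), (Rabs_left c) by lra]; assert (0 <= (b+c)*(b+c)) by apply Rle_0_sqr; assert (0 <= (b-c)*(b-c)) by apply Rle_0_sqr; nra. }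
  eapply Rle_trans; [apply Rle_abs|].
  rewrite !Rabs_mult.
  pose proof (Rabs_pos a). pose proof (Rabs_pos e). pose proof (Rabs_pos (b*c)).
  rewrite <- Rabs_mult.
  apply Rle_trans with (m * (Rabs (b * c) * (2 * G0))).
  - apply Rmult_le_compat; try lra.
    + apply Rmult_le_pos; lra.
    + apply Rmult_le_compat_l; lra.
  - assert (0 <= m) by (pose proof (Rabs_pos a); lra).
    assert (0 <= G0) by lra.
    replace (m * (Rabs (b * c) * (2 * G0))) with ((m * G0) * (2 * Rabs (b * c))) by ring.
    replace (G0 * m * (b ^ 2 + c ^ 2)) with ((m * G0) * (b ^ 2 + c ^ 2)) by ring.
    apply Rmult_le_compat_l; [apply Rmult_le_pos|]; lra.
Qed.

Section Main.
Variables (d : nat) (G : Mat -> Mat) (g : nat -> nat -> R) (H : R -> Mat)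
  (alpha : nat -> R) (gamma : R).
Hypothesis hG : diagonalizable d G g.
Hypothesis hsym : forall t, 0 <= t -> symmetric d (H t).
Hypothesis hmax_bound : forall i j, (i < j)%nat -> (j < d)%nat ->
      g i j * (alpha i - alpha j) <= - gamma.

Definition x t i j := offdiag (H t) i j.
Definition V t := fsum d (fun i => fsum d (fun j => x t i j ^ 2)).
Definition xd t i j := if Nat.eqb i j then 0 else comm d (H t) (G (H t)) i j.
Definition Vd t := fsum d (fun i => fsum d (fun j => 2 * x t i j * xd t i j)).
Definition Gm := fsum d (fun i => fsum d (fun j => Rabs (g i j))).

Lemma g_anti i j : (i < d)%nat -> (j < d)%nat -> g i j = - g j i.
Proof. destruct hG as [_ [_ [_ [h _]]]]. auto. Qed.

Lemma g_diag i : (i < d)%nat -> g i i = 0.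
Proof. intros Hi. pose proof (g_anti i i Hi Hi). lra. Qed.

Lemma g_bound i j : (i < d)%nat -> (j < d)%nat -> Rabs (g i j) <= Gm.
Proof.
  intros Hi Hj. unfold Gm.
  eapply Rle_trans; [|apply (fsum_elem_le _ _ i); auto].
  - apply (fsum_elem_le _ (fun j => Rabs (g i j)) j); auto. intros; apply Rabs_pos.
  - intros; apply fsum_nonneg; intros; apply Rabs_pos.
Qed.

Lemma Gm_nonneg : 0 <= Gm.
Proof. unfold Gm; apply fsum_nonneg; intros; apply fsum_nonneg; intros; apply Rabs_pos. Qed.

Lemma x_diag t i : x t i i = 0.
Proof. unfold x, offdiag. rewrite Nat.eqb_refl. reflexivity. Qed.

Lemma x_neq t i j : i <> j -> x t i j = H t i j.
Proof. intros Hij. unfold x, offdiag. apply Nat.eqb_neq in Hij. rewrite Hij. reflexivity. Qed.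

Lemma V_nonneg t : 0 <= V t.
Proof. unfold V; apply fsum_nonneg; intros; apply fsum_nonneg; intros. apply pow2_ge_0. Qed.

Lemma x_sq_le t i j : (i < d)%nat -> (j < d)%nat -> x t i j ^ 2 <= V t.
Proof.
  intros Hi Hj. unfold V.
  eapply Rle_trans; [|apply (fsum_elem_le _ _ i); auto].
  - apply (fsum_elem_le _ (fun j => x t i j ^ 2) j); auto. intros; apply pow2_ge_0.
  - intros; apply fsum_nonneg; intros; apply pow2_ge_0.
Qed.

Lemma x_abs_le t i j : (i < d)%nat -> (j < d)%nat -> Rabs (x t i j) <= sqrt (V t).
Proof.
  intros Hi Hj. rewrite <- sqrt_Rsqr_abs. apply sqrt_le_1_alt.
  unfold Rsqr. pose proof (x_sq_le t i j Hi Hj). simpl in H0. lra.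
Qed.

Lemma comm_formula t i j : 0 <= t -> (i < d)%nat -> (j < d)%nat ->
  comm d (H t) (G (H t)) i j = fsum d (fun k => H t i k * H t k j * (g k j - g i k)).
Proof.
  intros Ht Hi Hj. unfold comm, mmul. rewrite <- fsum_minus. apply fsum_ext; intros k Hk.
  rewrite !(G_entry d G g hG (H t) (hsym t Ht)) by auto. ring.
Qed.

Lemma xd_formula t i j : 0 <= t -> (i < d)%nat -> (j < d)%nat -> i <> j ->
  xd t i j = g i j * (H t i i - H t j j) * x t i j + fsum d (fun k => x t i k * x t k j * (g k j - g i k)).
Proof.
  intros Ht Hi Hj Hij. unfold xd. apply Nat.eqb_neq in Hij as E. rewrite E.
  rewrite comm_formula by auto.
  rewrite (fsum_ext d _ (fun k => x t i k * x t k j * (g k j - g i k) +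
     (ind i k * (H t i i * H t i j * (g i j - g i i)) + ind j k * (H t i j * H t j j * (g j j - g i j))))).
  - rewrite !fsum_plus, fsum_ind_l, fsum_ind_l by auto.
    rewrite (x_neq t i j Hij), g_diag, g_diag by auto. ring.
  - intros k Hk. destruct (Nat.eq_dec k i) as [->|Hki].
    + rewrite ind_eq, ind_neq, x_diag by lia. ring.
    + destruct (Nat.eq_dec k j) as [->|Hkj].
      * rewrite ind_eq, ind_neq, x_diag by lia. ring.
      * rewrite !ind_neq by lia. rewrite !x_neq by lia. ring.
Qed.

Hypothesis hode : forall t, 0 < t -> forall i j, (i < d)%nat -> (j < d)%nat ->
     derivable_pt_lim (fun s => H s i j) t (comm d (H t) (G (H t)) i j).

Lemma V_deriv t : 0 < t -> derivable_pt_lim V t (Vd t).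
Proof.
  intros Ht. unfold V, Vd.
  apply (derivable_fsum d (fun i s => fsum d (fun j => x s i j ^ 2))). intros i Hi.
  apply (derivable_fsum d (fun j s => x s i j ^ 2)). intros j Hj.
  unfold x, xd, offdiag. destruct (Nat.eqb i j).
  - apply (derivable_pt_lim_ext (fun _ => 0)). { intros; simpl; ring. }
    replace (2 * 0 * 0) with 0 by ring. apply derivable_pt_lim_const.
  - apply (derivable_pt_lim_ext (fun s => H s i j * H s i j)). { intros; simpl; ring. }
    replace (2 * H t i j * comm d (H t) (G (H t)) i j) with
      (comm d (H t) (G (H t)) i j * H t i j + H t i j * comm d (H t) (G (H t)) i j) by ring.
    apply (derivable_pt_lim_mult (fun s => H s i j) (fun s => H s i j)); apply hode; auto.
Qed.

Lemma gap_bound i j : (i < d)%nat -> (j < d)%nat -> i <> j ->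
  g i j * (alpha i - alpha j) <= - gamma.
Proof.
  intros Hi Hj Hij. destruct (Nat.lt_ge_cases i j).
  - apply hmax_bound; auto.
  - rewrite (g_anti i j) by auto.
    replace (- g j i * (alpha i - alpha j)) with (g j i * (alpha j - alpha i)) by ring.
    apply hmax_bound; lia.
Qed.

Lemma term_bound t e i j : 0 <= t -> (i < d)%nat -> (j < d)%nat ->
  (forall k, (k < d)%nat -> Rabs (H t k k - alpha k) <= e) ->
  x t i j * xd t i j <= (- gamma + 2 * Gm * e) * x t i j ^ 2 +
     fsum d (fun k => Gm * sqrt (V t) * (x t i k ^ 2 + x t k j ^ 2)).
Proof.
  intros Ht Hi Hj He.
  assert (HS : 0 <= fsum d (fun k => Gm * sqrt (V t) * (x t i k ^ 2 + x t k j ^ 2))).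
  { apply fsum_nonneg; intros. apply Rmult_le_pos.
    - apply Rmult_le_pos; [apply Gm_nonneg|apply sqrt_pos].
    - pose proof (pow2_ge_0 (x t i i0)); pose proof (pow2_ge_0 (x t i0 j)); lra. }
  destruct (Nat.eq_dec i j) as [<-|Hij].
  - rewrite x_diag. replace (0 * xd t i i) with 0 by ring. replace ((- gamma + 2 * Gm * e) * 0 ^ 2) with 0 by ring. lra.
  - rewrite xd_formula by auto.
    rewrite Rmult_plus_distr_l. apply Rplus_le_compat.
    + assert (Hc : g i j * (H t i i - H t j j) <= - gamma + 2 * Gm * e).
      { replace (g i j * (H t i i - H t j j)) with
          (g i j * (alpha i - alpha j) + g i j * ((H t i i - alpha i) - (H t j j - alpha j))) by ring.
        pose proof (gap_bound i j Hi Hj Hij).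
        assert (g i j * ((H t i i - alpha i) - (H t j j - alpha j)) <= 2 * Gm * e); [|lra].
        eapply Rle_trans; [apply Rle_abs|]. rewrite Rabs_mult.
        pose proof (He i Hi). pose proof (He j Hj).
        assert (Rabs ((H t i i - alpha i) - (H t j j - alpha j)) <= 2 * e).
        { eapply Rle_trans; [apply Rabs_triang|]. rewrite Rabs_Ropp. lra. }
        replace (2 * Gm * e) with (Gm * (2 * e)) by ring.
        apply Rmult_le_compat; auto using Rabs_pos, g_bound. }
      pose proof (pow2_ge_0 (x t i j)).
      replace (x t i j * (g i j * (H t i i - H t j j) * x t i j)) with
        (g i j * (H t i i - H t j j) * x t i j ^ 2) by ring.
      apply Rmult_le_compat_r; auto.
    + rewrite <- fsum_scale. apply fsum_le. intros k Hk.
      apply cubic.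
      * apply x_abs_le; auto.
      * eapply Rle_trans; [apply Rabs_triang|]. rewrite Rabs_Ropp.
        pose proof (g_bound k j Hk Hj). pose proof (g_bound i k Hi Hk). lra.
Qed.

Lemma S1 t : fsum d (fun i => fsum d (fun j => fsum d (fun k => x t i k ^ 2))) = INR d * V t.
Proof.
  unfold V. rewrite <- fsum_scale. apply fsum_ext; intros. apply fsum_const.
Qed.

Lemma S2 t : fsum d (fun i => fsum d (fun j => fsum d (fun k => x t k j ^ 2))) = INR d * V t.
Proof.
  rewrite (fsum_ext d _ (fun _ => V t)).
  - apply fsum_const.
  - intros i _. unfold V. rewrite fsum_swap. reflexivity.
Qed.

Lemma Vd_bound t e : 0 <= t ->
  (forall k, (k < d)%nat -> Rabs (H t k k - alpha k) <= e) ->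
  Vd t <= 2 * (- gamma + 2 * Gm * e + 2 * Gm * INR d * sqrt (V t)) * V t.
Proof.
  intros Ht He. unfold Vd.
  set (A := - gamma + 2 * Gm * e). set (c := Gm * sqrt (V t)).
  apply Rle_trans with (fsum d (fun i => fsum d (fun j =>
     2 * (A * x t i j ^ 2) + 2 * c * (fsum d (fun k => x t i k ^ 2) + fsum d (fun k => x t k j ^ 2))))).
  - apply fsum_le; intros i Hi; apply fsum_le; intros j Hj.
    pose proof (term_bound t e i j Ht Hi Hj He) as TB. fold A c in TB.
    assert (E2 : fsum d (fun k => x t i k ^ 2) + fsum d (fun k => x t k j ^ 2) = fsum d (fun k => x t i k ^ 2 + x t k j ^ 2)) by (symmetry; apply fsum_plus).
    rewrite E2.
    replace (2 * x t i j * xd t i j) with (2 * (x t i j * xd t i j)) by ring.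
    assert (fsum d (fun k => c * (x t i k ^ 2 + x t k j ^ 2)) = c * fsum d (fun k => x t i k ^ 2 + x t k j ^ 2)) as E by apply fsum_scale.
    rewrite E in TB. lra.
  - rewrite (fsum_ext d _ (fun i => 2 * A * fsum d (fun j => x t i j ^ 2) +
        2 * c * (fsum d (fun j => fsum d (fun k => x t i k ^ 2)) + fsum d (fun j => fsum d (fun k => x t k j ^ 2))))).
    + rewrite fsum_plus, !fsum_scale, fsum_plus, S1, S2. fold (V t). unfold c. 
      right. ring.
    + intros i _. rewrite <- fsum_scale, <- fsum_plus, <- fsum_scale, <- fsum_plus.
      apply fsum_ext; intros; ring.
Qed.

Lemma Dd_bound t i : 0 <= t -> (i < d)%nat -> Rabs (comm d (H t) (G (H t)) i i) <= 2 * Gm * V t.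
Proof.
  intros Ht Hi. rewrite comm_formula by auto.
  rewrite (fsum_ext d _ (fun k => x t i k ^ 2 * (g k i - g i k))).
  - eapply Rle_trans; [apply fsum_abs|].
    apply Rle_trans with (fsum d (fun k => 2 * Gm * x t i k ^ 2)).
    + apply fsum_le; intros k Hk. rewrite Rabs_mult.
      rewrite Rabs_right by (apply Rle_ge, pow2_ge_0).
      rewrite Rmult_comm. apply Rmult_le_compat_r; [apply pow2_ge_0|].
      eapply Rle_trans; [apply Rabs_triang|]. rewrite Rabs_Ropp.
      pose proof (g_bound k i Hk Hi). pose proof (g_bound i k Hi Hk). lra.
    + rewrite fsum_scale. apply Rmult_le_compat_l.
      * pose proof Gm_nonneg; lra.
      * unfold V. apply (fsum_elem_le d (fun i => fsum d (fun j => x t i j ^ 2)) i); auto.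
        intros; apply fsum_nonneg; intros; apply pow2_ge_0.
  - intros k Hk. destruct (Nat.eq_dec k i) as [->|Hki].
    + ring.
    + rewrite x_neq by lia. rewrite (hsym t Ht k i) by auto. ring.
Qed.

Hypothesis hconv : forall i j, (i < d)%nat -> (j < d)%nat ->
     forall eps, 0 < eps -> exists T, forall t, T <= t ->
       Rabs (H t i j - (if Nat.eqb i j then alpha i else 0)) < eps.
Hypothesis hgamma : - gamma < 0.

Lemma unif_conv eps : 0 < eps -> exists T, forall t, T <= t -> forall i, (i < d)%nat -> forall j, (j < d)%nat ->
  Rabs (H t i j - (if Nat.eqb i j then alpha i else 0)) < eps.
Proof.
  intros He.
  apply (unif1 (fun i t => forall j, (j < d)%nat -> Rabs (H t i j - (if Nat.eqb i j then alpha i else 0)) < eps)).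
  intros i Hi.
  apply (unif1 (fun j t => Rabs (H t i j - (if Nat.eqb i j then alpha i else 0)) < eps)).
  intros j Hj. apply hconv; auto.
Qed.

Lemma phase1 : exists T0 M, 1 <= T0 /\ 0 <= M /\ forall t, T0 <= t -> V t <= M * exp (- gamma * t).
Proof.
  pose proof Gm_nonneg as HGm. pose proof (pos_INR d) as Hd.
  set (K := 2 * Gm + 2 * Gm * INR d * INR d).
  assert (HK : 0 <= K). { unfold K. assert (0 <= Gm * INR d * INR d) by (repeat apply Rmult_le_pos; auto). lra. }
  set (eta := gamma / (2 * (K + 1))).
  assert (Heta : 0 < eta). { unfold eta. apply Rdiv_lt_0_compat; lra. }
  assert (HKe : K * eta * 2 + 2 * eta = gamma). { unfold eta. field. lra. }
  destruct (unif_conv eta Heta) as [T HT].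
  exists (Rmax T 1), (V (Rmax T 1) * exp (gamma * Rmax T 1)).
  pose proof (Rmax_l T 1). pose proof (Rmax_r T 1).
  split; [lra|]. split.
  { apply Rmult_le_pos; [apply V_nonneg| left; apply exp_pos]. }
  assert (Hbd : forall t, Rmax T 1 <= t -> Vd t <= - gamma * V t).
  { intros t Ht.
    assert (He : forall k, (k < d)%nat -> Rabs (H t k k - alpha k) <= eta).
    { intros k Hk. pose proof (HT t ltac:(lra) k Hk k Hk) as Q. rewrite Nat.eqb_refl in Q. lra. }
    assert (Hx : forall i j, (i < d)%nat -> (j < d)%nat -> x t i j ^ 2 <= eta ^ 2).
    { intros i j Hi Hj. destruct (Nat.eq_dec i j) as [<-|Hij].
      - rewrite x_diag. simpl. nra.
      - rewrite x_neq by auto. pose proof (HT t ltac:(lra) i Hi j Hj) as Q.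
        apply Nat.eqb_neq in Hij. rewrite Hij in Q. rewrite Rminus_0_r in Q.
        apply Rabs_def2 in Q. nra. }
    assert (HV : V t <= (INR d * eta) ^ 2).
    { unfold V. apply Rle_trans with (fsum d (fun i => fsum d (fun j => eta ^ 2))).
      - apply fsum_le; intros; apply fsum_le; intros; apply Hx; auto.
      - rewrite (fsum_ext d _ (fun _ => INR d * eta ^ 2)) by (intros; apply fsum_const).
        rewrite fsum_const. right; ring. }
    assert (Hs : sqrt (V t) <= INR d * eta).
    { rewrite <- (sqrt_pow2 (INR d * eta)) by (apply Rmult_le_pos; lra).
      apply sqrt_le_1_alt; auto. }
    eapply Rle_trans; [apply (Vd_bound t eta); auto; lra|].
    assert (2 * Gm * INR d * sqrt (V t) <= 2 * Gm * INR d * (INR d * eta)).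
    { apply Rmult_le_compat_l; auto. repeat apply Rmult_le_pos; lra. }
    assert (2 * Gm * INR d * (INR d * eta) + 2 * Gm * eta = K * eta) by (unfold K; ring).
    pose proof (V_nonneg t).
    assert (2 * (- gamma + 2 * Gm * eta + 2 * Gm * INR d * sqrt (V t)) <= - gamma) by lra.
    apply Rmult_le_compat_r; auto. }
  intros t Ht.
  assert (Hf : V t * exp (gamma * t) <= V (Rmax T 1) * exp (gamma * Rmax T 1)).
  { apply (nonincr (fun s => V s * exp (gamma * s))
       (fun s => Vd s * exp (gamma * s) + V s * (gamma * exp (gamma * s)))); auto.
    - intros c Hc. apply (derivable_pt_lim_mult V (fun s => exp (gamma * s))); [apply V_deriv; lra| apply dexp_lin].
    - intros c Hc. pose proof (Hbd c ltac:(lra)). pose proof (exp_pos (gamma * c)).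
      replace (Vd c * exp (gamma * c) + V c * (gamma * exp (gamma * c))) with
        (exp (gamma * c) * (Vd c + gamma * V c)) by ring.
      assert (Vd c + gamma * V c <= 0) by lra. nra. }
  replace (V t) with (V t * exp (gamma * t) * exp (- gamma * t)).
  - apply Rmult_le_compat_r; [left; apply exp_pos| auto].
  - rewrite Rmult_assoc, <- exp_plus. replace (gamma * t + - gamma * t) with 0 by ring.
    rewrite exp_0; ring.
Qed.

Lemma phase2 T0 M : 1 <= T0 -> 0 <= M -> (forall t, T0 <= t -> V t <= M * exp (- gamma * t)) ->
  forall t, T0 <= t -> forall i, (i < d)%nat ->
  Rabs (H t i i - alpha i) <= (2 * Gm * M / gamma) * exp (- gamma * t).
Proof.
  intros HT0 HM HVM t Ht i Hi.
  pose proof Gm_nonneg as HGm.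
  set (c := 2 * Gm * M / gamma).
  assert (Hc0 : 0 <= c). { unfold c. apply Rmult_le_pos; [|left; apply Rinv_0_lt_compat; lra]. nra. }
  assert (Hcg : c * gamma = 2 * Gm * M). { unfold c. field. lra. }
  assert (Hcomm : forall s, T0 <= s -> Rabs (comm d (H s) (G (H s)) i i) <= c * gamma * exp (- gamma * s)).
  { intros s Hs. eapply Rle_trans; [apply Dd_bound; auto; lra|]. rewrite Hcg.
    replace (2 * Gm * M * exp (- gamma * s)) with ((2 * Gm) * (M * exp (- gamma * s))) by ring. apply Rmult_le_compat_l; [lra|]. apply HVM; auto. }
  assert (Hder : forall (sg : R) s, T0 <= s -> derivable_pt_lim (fun u => sg * H u i i + c * exp (- gamma * u)) s
     (sg * comm d (H s) (G (H s)) i i + c * (- gamma * exp (- gamma * s)))).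
  { intros sg s Hs.
    apply (derivable_pt_lim_plus (fun u => sg * H u i i) (fun u => c * exp (- gamma * u))).
    - apply (derivable_pt_lim_scal (fun u => H u i i)). apply hode; auto; lra.
    - apply (derivable_pt_lim_scal (fun u => exp (- gamma * u))). apply dexp_lin. }
  assert (Hmono : forall (sg : R), (sg = 1 \/ sg = -1) -> forall s, t <= s ->
    sg * H s i i + c * exp (- gamma * s) <= sg * H t i i + c * exp (- gamma * t)).
  { intros sg Hsg s Hs.
    apply (nonincr (fun u => sg * H u i i + c * exp (- gamma * u))
       (fun u => sg * comm d (H u) (G (H u)) i i + c * (- gamma * exp (- gamma * u)))); auto.
    - intros u Hu. apply Hder; lra.
    - intros u Hu. pose proof (Hcomm u ltac:(lra)) as Q. pose proof (Rle_abs (comm d (H u) (G (H u)) i i)); pose proof (Rle_abs (- comm d (H u) (G (H u)) i i)) as Q2; rewrite Rabs_Ropp in Q2.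
      destruct Hsg as [->| ->]; lra. }
  assert (Hlim : forall (sg : R), (sg = 1 \/ sg = -1) -> sg * alpha i <= sg * H t i i + c * exp (- gamma * t)).
  { intros sg Hsg. destruct (Rle_lt_dec (sg * alpha i) (sg * H t i i + c * exp (- gamma * t))) as [|Hlt]; auto.
    exfalso. set (eps := sg * alpha i - (sg * H t i i + c * exp (- gamma * t))).
    assert (Heps : 0 < eps) by (unfold eps; lra).
    destruct (hconv i i Hi Hi eps Heps) as [T' HT'].
    pose proof (HT' (Rmax T' t) (Rmax_l _ _)) as Q. rewrite Nat.eqb_refl in Q.
    apply Rabs_def2 in Q.
    pose proof (Hmono sg Hsg (Rmax T' t) (Rmax_r _ _)).
    pose proof (exp_pos (- gamma * Rmax T' t)).
    assert (0 <= c * exp (- gamma * Rmax T' t)) by (apply Rmult_le_pos; lra).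
    unfold eps in *. destruct Hsg as [-> | ->]; lra. }
  pose proof (Hlim 1 (or_introl eq_refl)). pose proof (Hlim (-1) (or_intror eq_refl)).
  apply Rabs_le. lra.
Qed.

Lemma exp_mono a b : a <= b -> exp a <= exp b.
Proof. intros H0. destruct (Rle_lt_or_eq_dec a b H0) as [Hl| ->]; [left; apply exp_increasing; auto| right; auto]. Qed.

Lemma phase3 : exists T C, 0 < T /\ 0 < C /\ forall t, T <= t -> sqrt (V t) <= C * exp (- gamma * t).
Proof.
  destruct phase1 as [T0 [M [HT0 [HM HVM]]]].
  pose proof (phase2 T0 M HT0 HM HVM) as HD.
  pose proof Gm_nonneg as HGm. pose proof (pos_INR d) as Hd.
  set (c := 2 * Gm * M / gamma) in HD.
  assert (Hc0 : 0 <= c). { unfold c. apply Rmult_le_pos; [|left; apply Rinv_0_lt_compat; lra]. nra. }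
  set (beta := gamma / 2).
  assert (Hb : 0 < beta) by (unfold beta; lra).
  set (A := 2 * Gm * c + 2 * Gm * INR d * sqrt M).
  assert (HA : 0 <= A).
  { unfold A. pose proof (sqrt_pos M).
    assert (0 <= Gm * c) by (apply Rmult_le_pos; auto).
    assert (0 <= Gm * INR d * sqrt M) by (repeat apply Rmult_le_pos; auto). lra. }
  assert (Hs : forall t, T0 <= t -> sqrt (V t) <= sqrt M * exp (- beta * t)).
  { intros t Ht. eapply Rle_trans; [apply sqrt_le_1_alt; apply HVM; auto|].
    rewrite sqrt_mult by (auto; left; apply exp_pos). rewrite sqrt_exp.
    right. f_equal. f_equal. unfold beta; field. }
  assert (Hexp : forall t, T0 <= t -> exp (- gamma * t) <= exp (- beta * t)).
  { intros t Ht. apply exp_mono. unfold beta. nra. }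
  assert (Hbd : forall t, T0 <= t -> Vd t <= 2 * (- gamma + A * exp (- beta * t)) * V t).
  { intros t Ht. eapply Rle_trans; [apply (Vd_bound t (c * exp (- gamma * t))); [lra| intros; apply HD; auto]|].
    pose proof (V_nonneg t). apply Rmult_le_compat_r; auto.
    assert (2 * Gm * (c * exp (- gamma * t)) <= 2 * Gm * (c * exp (- beta * t))).
    { apply Rmult_le_compat_l; [lra|]. apply Rmult_le_compat_l; auto. }
    assert (2 * Gm * INR d * sqrt (V t) <= 2 * Gm * INR d * (sqrt M * exp (- beta * t))).
    { apply Rmult_le_compat_l; [repeat apply Rmult_le_pos; lra|]. apply Hs; auto. }
    assert (A * exp (- beta * t) = 2 * Gm * (c * exp (- beta * t)) + 2 * Gm * INR d * (sqrt M * exp (- beta * t))) by (unfold A; ring).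
    lra. }
  set (K := 2 * A / beta).
  set (u := fun s => 2 * gamma * s + K * exp (- beta * s)).
  set (N := V T0 * exp (u T0)).
  assert (HU : forall t, T0 <= t -> V t * exp (u t) <= N).
  { intros t Ht. unfold N, u.
    apply (nonincr (fun s => V s * exp (2 * gamma * s + K * exp (- beta * s)))
      (fun s => Vd s * exp (2 * gamma * s + K * exp (- beta * s)) +
                V s * (exp (2 * gamma * s + K * exp (- beta * s)) * (2 * gamma + K * - beta * exp (- beta * s))))); auto.
    - intros s Hs'. apply (derivable_pt_lim_mult V (fun s => exp (2 * gamma * s + K * exp (- beta * s)))).
      + apply V_deriv; lra.
      + apply dexp_gen.
    - intros s Hs'. pose proof (Hbd s ltac:(lra)). pose proof (V_nonneg s).
      set (E := exp (2 * gamma * s + K * exp (- beta * s))).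
      assert (0 < E) by apply exp_pos.
      assert (HKb : K * - beta = - (2 * A)) by (unfold K; field; lra).
      replace (Vd s * E + V s * (E * (2 * gamma + K * - beta * exp (- beta * s)))) with
        (E * (Vd s + V s * (2 * gamma + K * - beta * exp (- beta * s)))) by ring.
      rewrite HKb.
      assert (Vd s + V s * (2 * gamma + - (2 * A) * exp (- beta * s)) <= 0) by nra.
      nra. }
  assert (HN : 0 <= N) by (unfold N; apply Rmult_le_pos; [apply V_nonneg| left; apply exp_pos]).
  exists T0, (sqrt N + 1). split; [lra|]. split; [pose proof (sqrt_pos N); lra|].
  intros t Ht.
  assert (HV : V t <= N * exp (- (2 * gamma) * t)).
  { assert (V t * exp (2 * gamma * t) <= N).
    { apply Rle_trans with (V t * exp (u t)); [|apply HU; auto]. apply Rmult_le_compat_l; [apply V_nonneg|].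
      apply exp_mono. unfold u. pose proof (exp_pos (- beta * t)).
      assert (0 <= K) by (unfold K; apply Rmult_le_pos; [lra| left; apply Rinv_0_lt_compat; lra]).
      nra. }
    replace (V t) with (V t * exp (2 * gamma * t) * exp (- (2 * gamma) * t)).
    - apply Rmult_le_compat_r; [left; apply exp_pos| auto].
    - rewrite Rmult_assoc, <- exp_plus. replace (2 * gamma * t + - (2 * gamma) * t) with 0 by ring.
      rewrite exp_0; ring. }
  eapply Rle_trans; [apply sqrt_le_1_alt; apply HV|].
  rewrite sqrt_mult by (auto; left; apply exp_pos). rewrite sqrt_exp.
  replace (- (2 * gamma) * t / 2) with (- gamma * t) by field.
  pose proof (exp_pos (- gamma * t)). lra.
Qed.
End Main.

Theorem proposition3p2
  (d : nat) (hd : (2 <= d)%nat)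
  (G : Mat -> Mat) (g : nat -> nat -> R) (hG : diagonalizable d G g)
  (H0 : Mat) (hH0 : symmetric d H0)
  (H : R -> Mat)
  (hsym : forall t, 0 <= t -> symmetric d (H t))
  (hinit : meq d (H 0) H0)
  (hode : forall t, 0 < t -> forall i j, (i < d)%nat -> (j < d)%nat ->
     derivable_pt_lim (fun s => H s i j) t (comm d (H t) (G (H t)) i j))
  (alpha : nat -> R)
  (hconv : forall i j, (i < d)%nat -> (j < d)%nat ->
     forall eps, 0 < eps -> exists T, forall t, T <= t ->
       Rabs (H t i j - (if Nat.eqb i j then alpha i else 0)) < eps)
  (gamma : R)
  (hmax_attained : exists i j, (i < j)%nat /\ (j < d)%nat /\
      g i j * (alpha i - alpha j) = - gamma)
  (hmax_bound : forall i j, (i < j)%nat -> (j < d)%nat ->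
      g i j * (alpha i - alpha j) <= - gamma)
  (hgamma : - gamma < 0) :
  exists T C, 0 < T /\ 0 < C /\ forall t, T <= t ->
    HSnorm d (offdiag (H t)) <= C * exp (- gamma * t).
Proof.
  destruct (phase3 d G g H alpha gamma hG hsym hmax_bound hode hconv hgamma) as [T [C [HT [HC Hb]]]].
  exists T, C. split; [exact HT|]. split; [exact HC|].
  intros t Ht. exact (Hb t Ht).
Qed.
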